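(* For every integer $k$ with $1\le k\le p-1$ and all $s\in\mathcal S_0^{(k)}$, $t\in\mathcal T_0^{(k)}$ one has $\langle s,t\rangle_k^{\rm BD}=\langle s,t\rangle_k^{\rm Boc}$ in $\mathcal Q^k$.
   Context: Let $p$ be a prime, $n\ge1$, $G$ a cyclic group of order $p^n$ with generator $\gamma$, $\mathcal R=\mathbb Z/p^n[G]$, $\mathcal I\subset\mathcal R$ the augmentation ideal, $\mathcal Q^k=\mathcal I^k/\mathcal I^{k+1}$, $N=\sum_{g\in G}g$. For an $\mathcal R$-module $M$, $M^\ast=\mathrm{Hom}_{\mathcal R}(M,\mathcal R)$ and $M_0=M^G$. Let $\mathcal S,\mathcal T$ be finitely generated $\mathcal R$-modules, $X,Y$ free $\mathcal R$-modules of finite rank, and $0\to\mathcal S\to X\xrightarrow{\ell}Y^\ast\to\mathcal T^\ast\to0$ exact; its dual is $0\to\mathcal T\to Y\xrightarrow{\ell^\ast}X^\ast\to\mathcal S^\ast\to0$ with $\ell^\ast(y)(x)=\ell(x)(y)$; we regard $\mathcal S\subset X$, $\mathcal T\subset Y$. Put $\mathcal S_0^{(k)}=\mathcal S_0\cap\mathcal I^{k-1}\mathcal S$, $\mathcal T_0^{(k)}=\mathcal T_0\cap\mathcal I^{k-1}\mathcal T$. Bertolini–Darmon pairing: $D^{(k)}=(-1)^k\sum_{i=0}^{p^n-1}\binom ik\gamma^{i-k}$. For $1\le k\le p-1$, $s\in\mathcal S_0^{(k)}$, $t\in\mathcal T_0^{(k)}$, choose $\tilde s\in\mathcal S$, $\tilde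 t\in\mathcal T$ with $(\gamma-1)^{k-1}\tilde s=s$, $(\gamma-1)^{k-1}\tilde t=t$, and $x_s\in X$, $y_t\in Y$ with $D^{(k-1)}x_s=\tilde s$, $D^{(k-1)}y_t=\tilde t$ (these exist); then $\ell(x_s)(y_t)\in\mathcal I^k$ and $\langle s,t\rangle^{\rm BD}_k$ is its class in $\mathcal Q^k$ (independent of all choices). Bockstein pairing: let $C=[X\xrightarrow{\ell}Y^\ast]$ (degrees 1,2) with filtration $\mathcal I^iC$ and spectral sequence $E_k^{i,j}=Z_k^{i,j}/(Z_{k-1}^{i+1,j-1}+B_{k-1}^{i,j})$, $Z_k^{i,j}=\ker(\mathcal I^iC^{i+j}\to C^{i+j+1}/\mathcal I^{i+k}C^{i+j+1})$, $B_k^{i,j}=\mathcal I^iC^{i+j}\cap d(\mathcal I^{i-k}C^{i+j-1})$ ($\mathcal I^m=\mathcal R$ for $m\le0$), differentials induced by $d$. Thus $E_k^{0,1}=\{x\in X:\ell(x)\in\mathcal I^kY^\ast\}/\{x\in\mathcal IX:\ell(x)\in\mathcal I^kY^\ast\}$, $E_k^{k,2-k}=\mathcal I^kY^\ast/(\mathcal I^{k+1}Y^\ast+\mathcal I^kY^\ast\cap\ell(\mathcal IX))$, and the derived Bockstein map $\beta^{(k)}=d_k^{0,1}$ sends the class of $x$ to the class of $\ell(x)$. Let $F_k^{i,j}$ be the analogous spectral sequence for $D=[Y\xrightarrow{\ell^\ast}X^\ast]$. The paper identifies $E_k^{0,1}\cong\mathcal S_0^{(k)}$ and $F_k^{0,1}\cong\mathcal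 T_0^{(k)}$ via the maps induced by $x\mapsto Nx$, $y\mapsto Ny$, and uses the cup product $E_k^{k,2-k}\times F_k^{0,1}\to\mathcal Q^k$, (class of $f$, class of $y$) $\mapsto f(y)\bmod\mathcal I^{k+1}$, to get $\iota_k:E_k^{k,2-k}\to\mathrm{Hom}(\mathcal T_0^{(k)},\mathcal Q^k)$. Then $\langle s,t\rangle_k^{\rm Boc}:=\iota_k(\beta^{(k)}(s))(t)$. *)

(* Defs.v *)
From HB Require Import structures.
From mathcomp Require Import all_boot all_order all_algebra.
Set Implicit Arguments.
Unset Strict Implicit.
Unset Printing Implicit Defensive.
Import GRing.Theory.
Local Open Scope ring_scope.

(* The group ring  R = Z/p^n [G],  G cyclic of order p^n with generator gamma,
   realised as  (Z/p^n)[X] / (X^(p^n) - 1),  gamma = class of X. *)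
Definition grpoly (p n : nat) : {poly 'Z_(p ^ n)} := 'X^(p ^ n) - 1.
Notation GR p n := {poly %/ grpoly p n}.

Definition gam (p n : nat) : GR p n := qpolyX (grpoly p n).

Definition Nel (p n : nat) : GR p n := \sum_(i < p ^ n) gam p n ^+ i.

Definition aug (p n : nat) (r : GR p n) : 'Z_(p ^ n) :=
  (polyn r : {poly 'Z_(p ^ n)}).[1].

Definition augI (p n : nat) (r : GR p n) : Prop := aug r = 0.

Fixpoint idpow (R : comNzRingType) (J : R -> Prop) (k : nat) : R -> Prop :=
  match k with
  | 0 => fun _ => True
  | k'.+1 => fun r => exists (m : nat) (u v : 'I_m -> R),
      (forall l, J (u l) /\ idpow J k' (v l)) /\ r = \sum_(l < m) u l * v l
  end.

Definition Ipow (p n k : nat) : GR p n -> Prop := idpow (@augI p n) k.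
Arguments Ipow : clear implicits.

(* Free modules X = R^a, Y = R^b (vectors of coordinates).  The R-linear map
   ell : X -> Y^* is given by its matrix L : ell(e_i)(e_j) = L i j.
   ell(x) in Y^* is represented by its coordinates in the dual basis. *)
Section Modules.
Variables (p n a b : nat) (L : 'I_a -> 'I_b -> GR p n).

Definition ell (x : 'I_a -> GR p n) : 'I_b -> GR p n :=
  fun j => \sum_(i < a) x i * L i j.
Definition ellT (y : 'I_b -> GR p n) : 'I_a -> GR p n :=
  fun i => \sum_(j < b) L i j * y j.
Definition ellpair (x : 'I_a -> GR p n) (y : 'I_b -> GR p n) : GR p n :=
  \sum_(j < b) ell x j * y j.

Definition inS (x : 'I_a -> GR p n) : Prop := forall j, ell x j = 0.
Definition inT (y : 'I_b -> GR p n) : Prop := forall i, ellT y i = 0.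

Definition Ginv (m : nat) (x : 'I_m -> GR p n) : Prop :=
  forall i, gam p n * x i = x i.

Definition insubmod (m : nat) (J : GR p n -> Prop)
  (M : ('I_m -> GR p n) -> Prop) (x : 'I_m -> GR p n) : Prop :=
  exists (q : nat) (r : 'I_q -> GR p n) (u : 'I_q -> 'I_m -> GR p n),
    (forall l, J (r l) /\ M (u l)) /\
    (forall i, x i = \sum_(l < q) r l * u l i).

Definition S0k (k : nat) (s : 'I_a -> GR p n) : Prop :=
  [/\ inS s, Ginv s & insubmod (Ipow p n k.-1) inS s].
Definition T0k (k : nat) (t : 'I_b -> GR p n) : Prop :=
  [/\ inT t, Ginv t & insubmod (Ipow p n k.-1) inT t].
End Modules.

(* D^(k) = (-1)^k sum_{i=0}^{p^n-1} C(i,k) gamma^(i-k)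
   (terms with i < k vanish since C(i,k) = 0) *)
Definition Dk (p n k : nat) : GR p n :=
  (-1) ^+ k * \sum_(i < p ^ n) ('C(i, k))%:R * gam p n ^+ (i - k).

(* Main.v *)
Require Import Defs.
From HB Require Import structures.
From mathcomp Require Import all_boot all_order all_algebra.
Import GRing.Theory.
Local Open Scope ring_scope.
From mathcomp Require Import zify ring.
Import Pdiv.Ring Pdiv.RingMonic.

Lemma P_gt1 (p n : nat) : prime p -> (0 < n)%N -> (1 < p ^ n)%N.
Proof.
move=> Hp; case: n => // n _; rewrite expnS.
have := prime_gt1 Hp => H1.
have H2 : (0 < p ^ n)%N by rewrite expn_gt0 prime_gt0.
by have := leq_mul H1 H2; rewrite muln1.
Qed.

Lemma grpoly_monic p n : prime p -> (0 < n)%N -> grpoly p n \is monic.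
Proof. move=> Hp Hn; rewrite /grpoly -polyC1; apply: monicXnsubC.
by rewrite expn_gt0 prime_gt0. Qed.

Lemma mk_monic_gr p n : prime p -> (0 < n)%N -> mk_monic (grpoly p n) = grpoly p n.
Proof.
move=> Hp Hn; rewrite /mk_monic grpoly_monic // andbT ifT //.
rewrite /grpoly -polyC1 size_XnsubC; last by rewrite expn_gt0 prime_gt0.
by rewrite ltnS ltnW // P_gt1.
Qed.

Lemma aug_in p n (q : {poly 'Z_(p ^ n)}) : prime p -> (0 < n)%N ->
  aug (in_qpoly (grpoly p n) q) = q.[1].
Proof.
move=> Hp Hn; rewrite /aug /= mk_monic_gr //.
rewrite [in RHS](rdivp_eq (@grpoly_monic p n Hp Hn) q) hornerD hornerM.
by rewrite /grpoly !hornerE expr1n subrr mulr0 add0r.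
Qed.

Lemma qpoly_eta p n (r : GR p n) : in_qpoly (grpoly p n) (polyn r) = r.
Proof. apply: val_inj; exact: (in_qpoly_small (size_mk_monic r)). Qed.

Lemma gam_in p n : gam p n = in_qpoly (grpoly p n) 'X.
Proof. by []. Qed.

Lemma sig_in p n : gam p n - 1 = in_qpoly (grpoly p n) ('X - 1).
Proof. by rewrite rmorphB rmorph1. Qed.

Lemma augI_sig p n (r : GR p n) : prime p -> (0 < n)%N ->
  augI r <-> exists q, r = (gam p n - 1) * q.
Proof.
move=> Hp Hn; split.
  rewrite /augI => H.
  have /factor_theorem [q Hq] : root (polyn r) 1 by rewrite rootE; apply/eqP.
  exists (in_qpoly (grpoly p n) q).
  by rewrite -(@qpoly_eta p n r) Hq rmorphM polyC1 sig_in mulrC.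
move=> [q ->]; rewrite /augI -(@qpoly_eta p n q) sig_in -rmorphM aug_in //.
by rewrite hornerM !hornerE subrr mul0r.
Qed.

Lemma gamP p n : prime p -> (0 < n)%N -> gam p n ^+ (p ^ n) = 1.
Proof.
move=> Hp Hn.
have -> : gam p n ^+ (p ^ n) = in_qpoly (grpoly p n) ('X^(p ^ n)) by rewrite gam_in rmorphXn.
have -> : ('X^(p ^ n) : {poly 'Z_(p ^ n)}) = grpoly p n + 1 by rewrite /grpoly subrK.
rewrite in_qpolyD in_qpoly1.
have -> : in_qpoly (grpoly p n) (grpoly p n) = 0.
  apply: val_inj => /=; rewrite mk_monic_gr //; exact: rmodpp (@grpoly_monic p n Hp Hn).
by rewrite add0r.
Qed.

Lemma geom_rot (R : comNzRingType) (x : R) m : (0 < m)%N -> x ^+ m = 1 ->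
  x * \sum_(i < m) x ^+ i = \sum_(i < m) x ^+ i.
Proof.
case: m => // P _ HP; rewrite mulr_sumr.
rewrite big_ord_recr /= -exprS HP big_ord_recl /= expr0 addrC.
by congr (_ + _); apply: eq_bigr => i _; rewrite -exprS.
Qed.

Lemma gamN p n : prime p -> (0 < n)%N -> gam p n * Nel p n = Nel p n.
Proof.
move=> Hp Hn; rewrite /Nel; apply: geom_rot; last exact: gamP.
by rewrite expn_gt0 prime_gt0.
Qed.

Lemma sigN p n (q : GR p n) : prime p -> (0 < n)%N -> Nel p n * ((gam p n - 1) * q) = 0.
Proof.
move=> Hp Hn; by rewrite mulrA [Nel p n * _]mulrC mulrBl gamN // mul1r subrr mul0r.
Qed.

Lemma Nel_val p n : prime p -> (0 < n)%N ->
  polyn (Nel p n) = \sum_(i < p ^ n) 'X^i.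
Proof.
move=> Hp Hn.
have E : Nel p n = in_qpoly (grpoly p n) (\sum_(i < p ^ n) 'X^i).
  by rewrite /Nel rmorph_sum; apply: eq_bigr => i _; rewrite rmorphXn.
rewrite E in_qpoly_small // mk_monic_gr //.
have -> : (\sum_(i < p ^ n) 'X^i : {poly 'Z_(p ^ n)}) = \poly_(i < p ^ n) 1.
  by rewrite poly_def; apply: eq_bigr => i _; rewrite scale1r.
apply: (leq_ltn_trans (size_poly _ _)).
rewrite /grpoly -polyC1 size_XnsubC //; by rewrite expn_gt0 prime_gt0.
Qed.

Lemma sumX0 (R : nzRingType) m : (0 < m)%N ->
  \sum_(i < m) ('X^i : {poly R})`_0 = 1.
Proof.
case: m => // m _; rewrite big_ord_recl /= coefXn eqxx big1 ?addr0 //.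
by move=> i _; rewrite coefXn.
Qed.

Lemma kerN p n (g : GR p n) : prime p -> (0 < n)%N -> Nel p n * g = 0 -> augI g.
Proof.
move=> Hp Hn H.
set c := aug g.
have : augI (g - in_qpoly (grpoly p n) c%:P).
  rewrite /augI -{1}(@qpoly_eta p n g).
  have -> : in_qpoly (grpoly p n) (polyn g) - in_qpoly (grpoly p n) c%:P =
            in_qpoly (grpoly p n) (polyn g - c%:P) by rewrite rmorphB.
  by rewrite aug_in // hornerD hornerN hornerC subrr.
move/(@augI_sig p n _ Hp Hn) => [q Hq].
have Hg : g = c *: 1 + (gam p n - 1) * q.
  have E : in_qpoly (grpoly p n) c%:P = c *: 1.
    by rewrite -in_qpoly1 -in_qpolyZ -mul_polyC mulr1.
  by rewrite -Hq -E addrC subrK.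
rewrite /augI -/c.
move: H; rewrite Hg mulrDr sigN // addr0 -scalerAr mulr1.
move/(congr1 (fun r : GR p n => (polyn r)`_0)).
rewrite poly_of_qpolyZ Nel_val // coefZ coef_sum coef0 sumX0 ?mulr1 //.
by rewrite expn_gt0 prime_gt0.
Qed.

Lemma natP0 p n : prime p -> (0 < n)%N -> ((p ^ n)%:R : GR p n) = 0.
Proof.
move=> Hp Hn; apply: val_inj => /=; rewrite qpolyC_natr -polyC_natr.
by rewrite pchar_Zp ?polyC0 // P_gt1.
Qed.

Lemma binP0 p n m : prime p -> (0 < n)%N -> (0 < m)%N -> (m <= p - 1)%N ->
  (('C(p ^ n, m))%:R : GR p n) = 0.
Proof.
move=> Hp Hn Hm1 Hm2.
have Hd : (p ^ n %| 'C(p ^ n, m))%N.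
  have Hc : coprime (p ^ n) m.
    rewrite coprimeXl // prime_coprime //; apply/negP => /dvdn_leq.
    have := prime_gt1 Hp; move: Hm1 Hm2; clear; lia.
  rewrite -(Gauss_dvdr _ Hc); case: m Hm1 {Hm2 Hc} => // m _.
  by rewrite -mul_bin_diag dvdn_mulr.
by rewrite -(divnK Hd) natrM natP0 // mulr0.
Qed.

Definition Tk p n j : GR p n := \sum_(i < p ^ n) ('C(i, j))%:R * gam p n ^+ (i - j).

Lemma Dk_T p n j : Dk p n j = (-1) ^+ j * Tk p n j.
Proof. by []. Qed.

Lemma term_step (R : comNzRingType) (g : R) (i j : nat) :
  g * (('C(i, j.+1))%:R * g ^+ (i - j.+1)) =
  ('C(i.+1, j.+1))%:R * g ^+ (i.+1 - j.+1) - ('C(i, j))%:R * g ^+ (i - j).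
Proof.
rewrite binS natrD subSS mulrDl addrK.
case: (ltnP j i) => Hij.
  by rewrite mulrCA -exprS -subSn.
by rewrite bin_small ?ltnS // !mul0r mulr0.
Qed.

Lemma Tstep p n j : prime p -> (0 < n)%N -> (j.+1 <= p - 1)%N ->
  (gam p n - 1) * Tk p n j.+1 = - Tk p n j.
Proof.
move=> Hp Hn Hj.
rewrite mulrBl mul1r /Tk mulr_sumr.
under eq_bigr => i _ do rewrite term_step.
rewrite sumrB.
set f := fun i : nat => ('C(i, j.+1))%:R * gam p n ^+ (i - j.+1).
have E : forall m : nat, (\sum_(i < m) ('C(i.+1, j.+1))%:R * gam p n ^+ (i.+1 - j.+1))
   = \sum_(i < m) f i.+1 by [].
rewrite E.
have E2 : forall m : nat, \sum_(i < m) f i.+1 = \sum_(i < m) f i + f m - f 0%N.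
  move=> m; rewrite -(big_mkord xpredT (fun i => f i.+1)) -(big_mkord xpredT f).
  apply/eqP; rewrite eq_sym subr_eq -big_nat_recr // big_nat_recl // addrC.
  by [].
rewrite E2 /f /= bin0n mul0r subr0 binP0 // mul0r addr0.
by rewrite addrC addKr.
Qed.

Lemma Dstep p n j : prime p -> (0 < n)%N -> (j.+1 <= p - 1)%N ->
  (gam p n - 1) * Dk p n j.+1 = Dk p n j.
Proof.
move=> Hp Hn Hj; rewrite !Dk_T mulrCA Tstep // exprS mulrN mulN1r mulNr opprK.
by [].
Qed.

Lemma D0 p n : Dk p n 0 = Nel p n.
Proof.
rewrite Dk_T expr0 mul1r /Tk /Nel; apply: eq_bigr => i _.
by rewrite bin0 mul1r subn0.
Qed.

Lemma DN p n j : prime p -> (0 < n)%N -> (j <= p - 1)%N ->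
  (gam p n - 1) ^+ j * Dk p n j = Nel p n.
Proof.
move=> Hp Hn; elim: j => [|j IH] Hj; first by rewrite expr0 mul1r D0.
by rewrite exprSr -mulrA Dstep // IH // ltnW.
Qed.

Lemma annD p n j (f : GR p n) : prime p -> (0 < n)%N -> (j <= p - 1)%N ->
  Dk p n j * f = 0 -> exists g, f = (gam p n - 1) ^+ j.+1 * g.
Proof.
move=> Hp Hn Hj Hf.
suff H : forall i, (i <= j.+1)%N -> exists g, f = (gam p n - 1) ^+ i * g.
  exact: H.
elim=> [|i IH] Hi; first by exists f; rewrite expr0 mul1r.
have [g Hg] := IH (ltnW Hi).
have Hij : (i <= j)%N by rewrite -ltnS.
have Hng : Nel p n * g = 0.
  rewrite -(@DN p n j Hp Hn Hj).
  have -> : (gam p n - 1) ^+ j = (gam p n - 1) ^+ (j - i) * (gam p n - 1) ^+ i.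
    by rewrite -exprD subnK.
  set D := Dk p n j in Hf *.
  clearbody D.
  by rewrite -!mulrA [_ ^+ i * _]mulrCA -Hg Hf !mulr0.
have /(@augI_sig p n _ Hp Hn) [g' Hg'] := @kerN p n g Hp Hn Hng.
by exists g'; rewrite Hg Hg' mulrA -exprSr.
Qed.

Lemma IpowE p n k (r : GR p n) : prime p -> (0 < n)%N ->
  Ipow p n k r <-> exists q, r = (gam p n - 1) ^+ k * q.
Proof.
move=> Hp Hn; rewrite /Ipow; elim: k r => [|k IH] r /=.
  by split=> // _; exists r; rewrite expr0 mul1r.
split.
  move=> [m [u [v [Huv ->]]]].
  apply: (big_ind (fun r => exists q, r = (gam p n - 1) ^+ k.+1 * q)).
  - by exists 0; rewrite mulr0.
  - by move=> _ _ [q1 ->] [q2 ->]; exists (q1 + q2); rewrite mulrDr.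
  move=> l _; have [/(@augI_sig p n _ Hp Hn) [a ->] /IH [b ->]] := Huv l.
  by exists (a * b); rewrite exprS mulrACA.
move=> [q ->]; exists 1%N, (fun _ => gam p n - 1), (fun _ => (gam p n - 1) ^+ k * q).
split; last by rewrite big_ord1 exprS mulrA.
move=> _; split; first by apply/(@augI_sig p n _ Hp Hn); exists 1; rewrite mulr1.
by apply/IH; exists q.
Qed.

Lemma sumM (R : comNzRingType) (s : R) e (m : nat) (F : 'I_m -> R) :
  (forall l, exists q, F l = s ^+ e * q) -> exists q, \sum_(l < m) F l = s ^+ e * q.
Proof.
move=> H; apply: (big_ind (fun r => exists q, r = s ^+ e * q)).
- by exists 0; rewrite mulr0.
- by move=> _ _ [q1 ->] [q2 ->]; exists (q1 + q2); rewrite mulrDr.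
by move=> l _; exact: H.
Qed.

Lemma pair_ident p n a b (L : 'I_a -> 'I_b -> GR p n) xs x yt y :
  ellpair L xs yt - ellpair L x y =
  \sum_(j < b) ell L xs j * (yt j - y j) + \sum_(i < a) (xs i - x i) * ellT L y i.
Proof.
have -> : \sum_(i < a) (xs i - x i) * ellT L y i =
          \sum_(j < b) (ell L xs j - ell L x j) * y j.
  rewrite /ellT /ell.
  under eq_bigr => i _ do rewrite mulr_sumr.
  under [RHS]eq_bigr => j _ do rewrite -sumrB mulr_suml.
  under [RHS]eq_bigr => j _ do under eq_bigr => i _ do rewrite -mulrBl -mulrA.
  exact: exchange_big.
rewrite /ellpair -big_split -sumrB; apply: eq_bigr => j _.
rewrite /=; ring.
Qed.

Theorem theoremB5 (p n : nat) (Hp : prime p) (Hn : (0 < n)%N)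
  (a b : nat) (L : 'I_a -> 'I_b -> GR p n) (k : nat)
  (Hk1 : (1 <= k)%N) (Hk2 : (k <= p - 1)%N)
  (s st xs x : 'I_a -> GR p n) (t tt yt y : 'I_b -> GR p n) :
  S0k L k s -> T0k L k t ->
  (* BD choices *)
  inS L st -> (forall i, (gam p n - 1) ^+ (k - 1) * st i = s i) ->
  inT L tt -> (forall j, (gam p n - 1) ^+ (k - 1) * tt j = t j) ->
  (forall i, Dk p n (k - 1) * xs i = st i) ->
  (forall j, Dk p n (k - 1) * yt j = tt j) ->
  (* Bockstein choices *)
  (forall j, Ipow p n k (ell L x j)) -> (forall i, Nel p n * x i = s i) ->
  (forall i, Ipow p n k (ellT L y i)) -> (forall j, Nel p n * y j = t j) ->
  Ipow p n k.+1 (ellpair L xs yt - ellpair L x y).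
Proof.
move=> _ _ HinSst Hst _ Htt Hxs Hyt _ HNx HellTy HNy.
have HK : (k - 1 <= p - 1)%N by lia.
have Ek : (k - 1).+1 = k by lia.
have hx : forall i, exists u, xs i - x i = (gam p n - 1) * u.
  move=> i; apply/(@augI_sig p n _ Hp Hn); apply: (@kerN p n _ Hp Hn).
  by rewrite mulrBr HNx -Hst -Hxs mulrA (@DN p n _ Hp Hn HK) subrr.
have hy : forall j, exists v, yt j - y j = (gam p n - 1) * v.
  move=> j; apply/(@augI_sig p n _ Hp Hn); apply: (@kerN p n _ Hp Hn).
  by rewrite mulrBr HNy -Htt -Hyt mulrA (@DN p n _ Hp Hn HK) subrr.
have hl : forall j, exists c, ell L xs j = (gam p n - 1) ^+ k * c.
  move=> j; rewrite -Ek; apply: (@annD p n _ _ Hp Hn HK).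
  rewrite -(HinSst j) /ell mulr_sumr; apply: eq_bigr => i _.
  by rewrite mulrA Hxs.
have hT : forall i, exists c, ellT L y i = (gam p n - 1) ^+ k * c.
  by move=> i; apply/(@IpowE p n k _ Hp Hn).
apply/(@IpowE p n k.+1 _ Hp Hn).
rewrite pair_ident.
have [q1 ->] : exists q, \sum_(j < b) ell L xs j * (yt j - y j) =
    (gam p n - 1) ^+ k.+1 * q.
  apply: sumM => j; have [c ->] := hl j; have [v ->] := hy j.
  by exists (c * v); rewrite exprSr mulrACA.
have [q2 ->] : exists q, \sum_(i < a) (xs i - x i) * ellT L y i =
    (gam p n - 1) ^+ k.+1 * q.
  apply: sumM => i; have [c ->] := hT i; have [u ->] := hx i.
  by exists (u * c); rewrite exprS mulrACA mulrC.
by exists (q1 + q2); rewrite mulrDr.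
Qed.
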